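(* Let $(X,\tau_\delta)_{\delta>0}$ be a Hilbert dilation system with $d=\dim X$, let $\mathcal E\subseteq X$ be an ellipsoid and $\epsilon\in(0,1/2)$. Then there exist closed intervals $J_1,\dots,J_d\subseteq(0,\infty)$ with $r(J_p)/l(J_p)\le\epsilon^{-2}$ for all $p$, such that $\tau_\delta\mathcal E$ is $\epsilon$-degenerate for every $\delta\in(0,\infty)\setminus\bigcup_{p=1}^dJ_p$.
   Context: Hilbert dilation system: $X$ a real Hilbert space of finite dimension $d$, $X=\bigoplus_{\nu=1}^mX_\nu$ orthogonal, $\tau_\delta|_{X_\nu}=\delta^{-\nu}\mathrm{id}$. An ellipsoid is a set $\{\sum_{i=1}^dc_i\sigma_iv_i:\sum c_i^2\le1\}$ with $\sigma_1\ge\dots\ge\sigma_d\ge0$ (principal axis lengths) and $\{v_i\}$ an orthonormal basis; it is $\epsilon$-degenerate if no principal axis length lies in $[\epsilon,\epsilon^{-1}]$. $l(J)\le r(J)$ denote the endpoints of an interval $J$. *)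

(* Defs.v *)
(* R : realType, X = 'rV[R]_d with the standard inner product. *)
From HB Require Import structures.
From mathcomp Require Import all_boot all_order all_algebra.
From mathcomp Require Import classical_sets reals.
Set Implicit Arguments. Unset Strict Implicit. Unset Printing Implicit Defensive.
Import Order.TTheory GRing.Theory Num.Theory.
Local Open Scope ring_scope.
Local Open Scope classical_set_scope.

Section Defs.
Variables (R : realType) (d : nat).

Definition ellipsoid_of (sigma : 'I_d -> R) (V : 'M[R]_d) : set 'rV[R]_d :=
  [set x | exists c : 'rV[R]_d,
     \sum_i (c 0 i) ^+ 2 <= 1 /\ x = \sum_i (c 0 i * sigma i) *: row i V].

Definition axes_data (sigma : 'I_d -> R) (V : 'M[R]_d) : Prop :=
  [/\ (forall i j : 'I_d, (i <= j)%N -> sigma j <= sigma i),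
      (forall i, 0 <= sigma i) & V *m V^T = 1%:M].

Definition is_ellipsoid_with (E : set 'rV[R]_d) sigma V : Prop :=
  axes_data sigma V /\ E = ellipsoid_of sigma V.

Definition is_ellipsoid (E : set 'rV[R]_d) : Prop :=
  exists sigma V, is_ellipsoid_with E sigma V.

Definition eps_degenerate (eps : R) (E : set 'rV[R]_d) : Prop :=
  exists sigma V, is_ellipsoid_with E sigma V /\
    forall i, ~ (eps <= sigma i <= eps^-1).

(* Orthogonal decomposition X = X_1 (+) ... (+) X_m, given by the orthogonal
   projections P nu onto X_(nu+1) (nu : 'I_m). *)
Definition hilbert_dilation_system (m : nat) (P : 'I_m -> 'M[R]_d) : Prop :=
  [/\ (forall nu, (P nu)^T = P nu),
      (forall nu, P nu *m P nu = P nu),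
      (forall nu mu, nu != mu -> P nu *m P mu = 0)
    & \sum_(nu < m) P nu = 1%:M].

Definition dil (m : nat) (P : 'I_m -> 'M[R]_d) (delta : R) (x : 'rV[R]_d)
  : 'rV[R]_d := \sum_(nu < m) (delta ^- nu.+1) *: (x *m P nu).

End Defs.

(* Main.v *)
Require Import Defs.
From HB Require Import structures.
From mathcomp Require Import all_boot all_order all_algebra.
From mathcomp Require Import classical_sets reals.
From mathcomp Require Import boolp ring lra zify.
Import Order.TTheory GRing.Theory Num.Theory.
Local Open Scope ring_scope.
Set Implicit Arguments. Unset Strict Implicit. Unset Printing Implicit Defensive.

Section Lin.
Variable R : realType.

Definition nrm2 n (x : 'rV[R]_n) := (x *m x^T) 0 0.
Definition qf n (M : 'M[R]_n) (x : 'rV[R]_n) := (x *m M *m x^T) 0 0.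

Lemma nrm2E n (x : 'rV[R]_n) : nrm2 x = \sum_i x 0 i ^+ 2.
Proof. by rewrite /nrm2 mxE; apply: eq_bigr => i _; rewrite mxE expr2. Qed.

Lemma nrm2_ge0 n (x : 'rV[R]_n) : 0 <= nrm2 x.
Proof. by rewrite nrm2E; apply: sumr_ge0 => i _; rewrite sqr_ge0. Qed.

Lemma nrm2_eq0 n (x : 'rV[R]_n) : (nrm2 x == 0) = (x == 0).
Proof.
apply/idP/idP; last by move/eqP->; rewrite /nrm2 mul0mx mxE.
rewrite nrm2E psumr_eq0; last by move=> i _; rewrite sqr_ge0.
move/allP => H; apply/eqP/rowP => j; rewrite mxE.
by have := H j (mem_index_enum j); rewrite sqrf_eq0 => /eqP.
Qed.

Lemma nrm2_gt0 n (x : 'rV[R]_n) : x != 0 -> 0 < nrm2 x.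
Proof. by move=> nz; rewrite lt_def nrm2_eq0 nz nrm2_ge0. Qed.

Lemma qfE n (M : 'M[R]_n) x :
  qf M x = \sum_i \sum_j x 0 i * M i j * x 0 j.
Proof.
rewrite /qf mxE exchange_big /=; apply: eq_bigr => j _.
rewrite !mxE big_distrl /=; apply: eq_bigr => i _; by [].
Qed.

Lemma nrm2_entry n (x : 'rV[R]_n) i : x 0 i ^+ 2 <= nrm2 x.
Proof.
rewrite nrm2E (bigD1 i) //= lerDl; apply: sumr_ge0 => j _; exact: sqr_ge0.
Qed.

Lemma qf_bound n (M : 'M[R]_n) x :
  qf M x <= (\sum_i \sum_j `|M i j|) * nrm2 x.
Proof.
rewrite qfE big_distrl /=; apply: ler_sum => i _.
rewrite big_distrl /=; apply: ler_sum => j _.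
have h1 := nrm2_entry x i; have h2 := nrm2_entry x j.
have h3 : x 0 i * x 0 j <= nrm2 x.
  have : 0 <= (x 0 i - x 0 j) ^+ 2 by rewrite sqr_ge0.
  by nra.
have h4 : - nrm2 x <= x 0 i * x 0 j.
  have : 0 <= (x 0 i + x 0 j) ^+ 2 by rewrite sqr_ge0.
  by nra.
have hn := nrm2_ge0 x.
rewrite -mulrA mulrC -mulrA (mulrC (x 0 j)).
case: (lerP 0 (M i j)) => hM.
  by rewrite (ger0_norm hM); nra.
by rewrite (ltr0_norm hM); nra.
Qed.

Lemma quad_disc (a b c : R) : 0 <= c ->
  (forall t, 0 <= a + 2 * b * t + c * t ^+ 2) -> b ^+ 2 <= a * c.
Proof.
move=> c0 H; case: (ltP 0 c) => hc.
  have := H (- b / c).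
  have -> : a + 2 * b * (- b / c) + c * (- b / c) ^+ 2 = (a * c - b ^+ 2) / c.
    by field; rewrite gt_eqF.
  by rewrite pmulr_lge0 ?invr_gt0 // subr_ge0.
have c0' : c = 0 by apply/eqP; rewrite eq_le hc c0.
subst c; rewrite mulr0 expr2; case: (eqVneq b 0) => [->|bn]; first by rewrite mulr0.
have := H (- (a + 1) / (2 * b)).
have -> : a + 2 * b * (- (a + 1) / (2 * b)) + 0 * (- (a + 1) / (2 * b)) ^+ 2 = -1.
  by field.
by rewrite oppr_ge0 ler10.
Qed.

Lemma qf_add n (A : 'M[R]_n) x y t : A^T = A ->
  qf A (x + t *: y) = qf A x + 2 * (x *m A *m y^T) 0 0 * t + qf A y * t ^+ 2.
Proof.
move=> sA.
have e : (y *m A *m x^T) 0 0 = (x *m A *m y^T) 0 0.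
  transitivity ((y *m A *m x^T)^T 0 0); first by rewrite [RHS]mxE.
  by rewrite !trmx_mul trmxK sA mulmxA.
have e' : y *m A *m x^T = x *m A *m y^T.
  by apply/matrixP => i j; rewrite !ord1 e.
have ht : (x + t *: y)^T = x^T + t *: y^T by apply/matrixP => i j; rewrite !mxE.
rewrite /qf ht !mulmxDl !mulmxDr -!scalemxAl -!scalemxAr e'.
set a := x *m A *m x^T; set u := x *m A *m y^T; set c := y *m A *m y^T.
rewrite !mxE.
ring.
Qed.

Lemma cauchy_schwarz n (A : 'M[R]_n) x y : A^T = A -> (forall z, 0 <= qf A z) ->
  ((x *m A *m y^T) 0 0) ^+ 2 <= qf A x * qf A y.
Proof.
move=> sA psd; apply: quad_disc; first exact: psd.
by move=> t; rewrite -qf_add.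
Qed.

End Lin.

Section Spec.
Variable R : realType.

Lemma nz_row m n (M : 'M[R]_(m,n)) : M != 0 -> exists i, row i M != 0.
Proof.
move=> nz; have [i hi|H] := pickP (fun i => row i M != 0); first by exists i.
case/eqP: nz; apply/matrixP => i j; have := H i => /= /negbFE/eqP/rowP/(_ j).
by rewrite !mxE.
Qed.

Lemma kernel_vec n k (M : 'M[R]_(n,k)) : (\rank M < n)%N ->
  exists y : 'rV[R]_n, y != 0 /\ y *m M = 0.
Proof.
move=> hr; have : kermx M != 0.
  apply/eqP => h; have := mxrank_ker M; rewrite h mxrank0 => /eqP.
  by rewrite eq_sym subn_eq0 leqNgt hr.
case/nz_row => i hi; exists (row i (kermx M)); split => //.
by apply/eqP; rewrite -sub_kermx row_sub.
Qed.

Lemma eD m n (A B : 'M[R]_(m,n)) i j : (A + B) i j = A i j + B i j.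
Proof. by rewrite mxE. Qed.
Lemma eB m n (A B : 'M[R]_(m,n)) i j : (A - B) i j = A i j - B i j.
Proof. by rewrite !mxE. Qed.
Lemma eZ m n a (A : 'M[R]_(m,n)) i j : (a *: A) i j = a * A i j.
Proof. by rewrite mxE. Qed.

Lemma qf_scal_sub n (a : R) (S : 'M[R]_n) z : qf (a%:M - S) z = a * nrm2 z - qf S z.
Proof.
rewrite /qf /nrm2 mulmxBr mul_mx_scalar mulmxBl -scalemxAl.
by rewrite eB eZ.
Qed.

Lemma nrm2Z n (a : R) (x : 'rV[R]_n) : nrm2 (a *: x) = a ^+ 2 * nrm2 x.
Proof.
rewrite /nrm2 linearZ /= -scalemxAl -scalemxAr !eZ.
by rewrite mulrA expr2.
Qed.

Lemma arith_aux (p s m ki K : R) : 0 < p -> 0 < K -> K * ki = 1 ->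
  p ^+ 2 <= (m * p - s) * (K * p) -> (m - ki) * p < s -> False.
Proof.
move=> pp Kp kk hx he.
have h1 : 0 < ki * p - (m * p - s) by lra.
have h2 : 0 < (ki * p - (m * p - s)) * (K * p) by rewrite mulr_gt0 // mulr_gt0.
have h3 : (ki * p) * (K * p) = p ^+ 2.
  by rewrite mulrACA (mulrC ki) kk mul1r expr2.
lra.
Qed.

Lemma spec_step n (S : 'M[R]_n) k (V : 'M[R]_(k,n)) (lam : nat -> R) :
  S^T = S -> (k < n)%N -> V *m V^T = 1%:M ->
  (forall i : 'I_k, row i V *m S = lam i *: row i V) ->
  exists y : 'rV[R]_n, exists mu : R,
    [/\ y *m V^T = 0, nrm2 y = 1, y *m S = mu *: y &
       forall x : 'rV[R]_n, x *m V^T = 0 -> qf S x <= mu * nrm2 x].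
Proof.
move=> sS kn VV eig.
have eigM : V *m S = diag_mx (\row_(i < k) lam i) *m V.
  apply/row_matrixP => i; rewrite row_mul eig mul_diag_mx.
  by apply/rowP => j; rewrite !mxE.
have SVt : S *m V^T = V^T *m diag_mx (\row_(i < k) lam i).
  by rewrite -[S]sS -trmx_mul eigM trmx_mul tr_diag_mx.
have [x0 [x0n x0V]] : exists x0 : 'rV_n, x0 != 0 /\ x0 *m V^T = 0.
  apply: kernel_vec; rewrite mxrank_tr; exact: leq_ltn_trans (rank_leq_row V) kn.
pose F := [set r : R | exists x : 'rV[R]_n, [/\ x != 0, x *m V^T = 0 & r = qf S x / nrm2 x]]%classic.
pose K0 := \sum_i \sum_j `|S i j|.
have hsF : has_sup F.
  split; first by exists (qf S x0 / nrm2 x0), x0.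
  exists K0 => r [x [xn xV ->]]; rewrite ler_pdivrMr ?nrm2_gt0 //; exact: qf_bound.
pose mu := sup F.
have ub : forall x : 'rV[R]_n, x *m V^T = 0 -> qf S x <= mu * nrm2 x.
  move=> x xV; have [->|xn] := eqVneq x 0.
    by rewrite /qf /nrm2 !mul0mx mxE mulr0.
  have := sup_upper_bound hsF (ltac:(by exists x) : F (qf S x / nrm2 x)).
  by rewrite ler_pdivrMr ?nrm2_gt0.
pose Q := 1%:M - V^T *m V.
have QVt : Q *m V^T = 0 by rewrite /Q mulmxBl mul1mx -mulmxA VV mulmx1 subrr.
have Qt : Q^T = Q by rewrite /Q linearB /= trmx1 trmx_mul trmxK.
have VQ : forall x : 'rV[R]_n, x *m V^T = 0 -> x *m Q = x.
  by move=> x xV; rewrite /Q mulmxBr mulmx1 mulmxA xV mul0mx subr0.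
pose M := mu%:M - S.
have Mt : M^T = M by rewrite /M linearB /= tr_scalar_mx sS.
pose A := Q *m M *m Q + V^T *m V.
have At : A^T = A by rewrite /A linearD /= !trmx_mul trmxK Qt Mt mulmxA.
have qfA : forall x : 'rV[R]_n, qf A x = qf M (x *m Q) + nrm2 (x *m V^T).
  move=> x; rewrite /qf /nrm2 /A mulmxDr mulmxDl eD !trmx_mul trmxK Qt.
  by rewrite !mulmxA.
have psdA : forall x : 'rV[R]_n, 0 <= qf A x.
  move=> x; rewrite qfA; apply: addr_ge0; last exact: nrm2_ge0.
  rewrite qf_scal_sub subr_ge0; apply: ub; by rewrite -mulmxA QVt mulmx0.
have Anu : A \notin unitmx.
  apply/negP => Au.
  pose Ai := invmx A.
  have Ait : Ai^T = Ai by rewrite /Ai trmx_inv At.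
  pose K := \sum_i \sum_j `|Ai i j|.
  have key : forall x : 'rV[R]_n, nrm2 x ^+ 2 <= qf A x * (K * nrm2 x).
    move=> x; have := cauchy_schwarz x (x *m Ai) At psdA.
    have -> : (x *m A *m (x *m Ai)^T) 0 0 = nrm2 x.
      by rewrite trmx_mul Ait !mulmxA -(mulmxA x A) mulmxV // mulmx1.
    have -> : qf A (x *m Ai) = qf Ai x.
      by rewrite /qf trmx_mul Ait !mulmxA -(mulmxA x Ai A) mulVmx // mulmx1.
    move=> h; apply: le_trans h _; rewrite ler_wpM2l //; exact: qf_bound.
  have K0le : 0 <= K by apply: sumr_ge0 => i _; apply: sumr_ge0 => j _.
  have Kpos : 0 < K.
    rewrite lt_def K0le andbT; apply/eqP => K0'; have := key x0.
    rewrite K0' mul0r mulr0 leNgt exprn_gt0 ?nrm2_gt0 //.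
  have [e [x [xn xV ->]] he] := sup_adherent (ltac:(by rewrite invr_gt0) : 0 < K^-1) hsF.
  have hx := key x.
  rewrite qfA VQ // xV qf_scal_sub in hx.
  have n0 : nrm2 (0 : 'rV[R]_k) = 0 by rewrite /nrm2 mul0mx mxE.
  rewrite n0 in hx.
  have pp := nrm2_gt0 xn.
  rewrite ltr_pdivlMr // in he.
  have kk : K * K^-1 = 1 by rewrite mulfV // gt_eqF.
  rewrite addr0 in hx; exact: (arith_aux pp Kpos kk hx he).
have [y0 [y0n y0A]] : exists y0 : 'rV[R]_n, y0 != 0 /\ y0 *m A = 0.
  apply: kernel_vec; rewrite ltn_neqAle rank_leq_row andbT.
  by rewrite -row_free_unit /row_free in Anu.
have AVt : A *m V^T = V^T.
  by rewrite /A mulmxDl -!mulmxA QVt !mulmx0 add0r VV mulmx1.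
have y0V : y0 *m V^T = 0 by rewrite -AVt mulmxA y0A mul0mx.
have y0MQ : y0 *m M *m Q = 0.
  by move: y0A; rewrite /A mulmxDr !mulmxA (VQ _ y0V) y0V mul0mx addr0.
have y0MV : y0 *m M *m V^T = 0.
  rewrite /M mulmxBr mul_mx_scalar mulmxBl -scalemxAl y0V scaler0 -mulmxA SVt.
  by rewrite mulmxA y0V mul0mx subrr.
have y0M : y0 *m M = 0.
  have -> : y0 *m M = y0 *m M *m (Q + V^T *m V) by rewrite /Q subrK mulmx1.
  by rewrite mulmxDr y0MQ mulmxA y0MV mul0mx addr0.
have y0S : y0 *m S = mu *: y0.
  by move: y0M; rewrite /M mulmxBr mul_mx_scalar => /eqP; rewrite subr_eq0 => /eqP <-.
pose s := Num.sqrt (nrm2 y0).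
have sp : 0 < s by rewrite /s sqrtr_gt0 nrm2_gt0.
exists (s^-1 *: y0), mu; split => //.
- by rewrite -scalemxAl y0V scaler0.
- by rewrite nrm2Z exprVn /s sqr_sqrtr ?nrm2_ge0 // mulVf // gt_eqF // nrm2_gt0.
- by rewrite -scalemxAl y0S scalerA mulrC -scalerA.
Qed.


Lemma row1 n (y : 'rV[R]_n) (j : 'I_1) : row j y = y.
Proof. by apply/rowP => l; rewrite mxE ord1. Qed.

Lemma qf_eig n (S : 'M[R]_n) y mu : y *m S = mu *: y -> qf S y = mu * nrm2 y.
Proof. by move=> h; rewrite /qf h -scalemxAl eZ. Qed.

Lemma spec_ind n (S : 'M[R]_n) : S^T = S -> forall k, (k <= n)%N ->
  exists V : 'M[R]_(k,n), exists lam : nat -> R,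
   [/\ V *m V^T = 1%:M, (forall i : 'I_k, row i V *m S = lam i *: row i V),
       (forall i j : nat, (i <= j)%N -> (j < k)%N -> lam j <= lam i) &
       (0 < k)%N -> forall x : 'rV[R]_n, x *m V^T = 0 -> qf S x <= lam k.-1 * nrm2 x].
Proof.
move=> sS; elim => [_|k IH kn].
  exists 0, (fun _ => 0); split => //; first by apply/matrixP => [[]].
  by move=> [].
have [V [lam [VV eig srt ubk]]] := IH (ltnW kn).
have [y [mu [yV ny yS uby]]] := spec_step sS kn VV eig.
have muk : (0 < k)%N -> mu <= lam k.-1.
  by move=> k0; have := ubk k0 y yV; rewrite (qf_eig yS) ny !mulr1.
pose lam' := fun i : nat => if i == k then mu else lam i.
rewrite -addn1; exists (col_mx V y), lam'; split.
- rewrite tr_col_mx mul_col_row VV yV.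
  have -> : V *m y^T = 0 by rewrite -[V]trmxK -trmx_mul yV trmx0.
  have -> : y *m y^T = 1%:M.
    by rewrite [y *m y^T]mx11_scalar -/(nrm2 y) ny.
  by rewrite -scalar_mx_block.
- move=> i; case: (splitP i) => j hj.
    have -> : i = lshift 1 j by apply/val_inj.
    rewrite rowKu eig /lam' /=; case: eqP => // e.
    by have := ltn_ord j; rewrite e ltnn.
  have -> : i = rshift k j by apply/val_inj.
  by rewrite rowKd row1 yS /lam' /= ord1 addn0 eqxx.
- move=> i j ij; rewrite addn1 ltnS leq_eqVlt => /orP [/eqP jk|jk].
    subst j; rewrite /lam' eqxx; case: eqP => // ik.
    have ik' : (i < k)%N by rewrite ltn_neqAle ij andbT; apply/eqP.
    have k0 : (0 < k)%N by apply: leq_ltn_trans ik'.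
    apply: le_trans (muk k0) _; apply: srt; last by rewrite prednK.
    by rewrite -ltnS prednK.
  rewrite /lam' (ltn_eqF jk) (ltn_eqF (leq_ltn_trans ij jk)); exact: srt.
- move=> _ x; rewrite tr_col_mx mul_mx_row => h.
  have [xV _] := eq_row_mx (etrans h (esym (row_mx0 _ _ _ _))).
  by rewrite addn1 /lam' /= eqxx; exact: uby.
Qed.

Lemma spectral n (S : 'M[R]_n) : S^T = S ->
  exists W : 'M[R]_n, exists lam : nat -> R,
   [/\ W *m W^T = 1%:M, S = W^T *m diag_mx (\row_(i < n) lam i) *m W &
       (forall i j : nat, (i <= j)%N -> (j < n)%N -> lam j <= lam i)].
Proof.
move=> sS; have [W [lam [WW eig srt _]]] := spec_ind sS (leqnn n).
exists W, lam; split => //.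
have eigM : W *m S = diag_mx (\row_(i < n) lam i) *m W.
  apply/row_matrixP => i; rewrite row_mul eig mul_diag_mx.
  by apply/rowP => j; rewrite !mxE.
by rewrite -mulmxA -eigM mulmxA (mulmx1C WW) mul1mx.
Qed.

End Spec.

Section SVD.
Variable R : realType.

Definition Dg n (f : 'I_n -> R) : 'M[R]_n := diag_mx (\row_i f i).

Lemma DgM n (f g : 'I_n -> R) : Dg f *m Dg g = Dg (fun i => f i * g i).
Proof.
apply/matrixP => i j; rewrite /Dg mul_diag_mx !mxE.
by case: (eqVneq i j) => [->|_]; rewrite ?mulr1n ?mulr0n ?mulr0.
Qed.

Lemma Dg_ext n (f g : 'I_n -> R) : (forall i, f i = g i) -> Dg f = Dg g.
Proof. by move=> h; rewrite /Dg; congr diag_mx; apply/rowP => i; rewrite !mxE h. Qed.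

Lemma DgT n (f : 'I_n -> R) : (Dg f)^T = Dg f.
Proof. exact: tr_diag_mx. Qed.

Lemma mul_Dg n m (A : 'M[R]_(m,n)) f i j : (A *m Dg f) i j = A i j * f j.
Proof. by rewrite /Dg mul_mx_diag !mxE. Qed.

Lemma Dg_mul n m (A : 'M[R]_(n,m)) f i j : (Dg f *m A) i j = f i * A i j.
Proof. by rewrite /Dg mul_diag_mx !mxE. Qed.

Lemma qf_Dg n (f : 'I_n -> R) c : qf (Dg f) c = \sum_i f i * c 0 i ^+ 2.
Proof.
rewrite /qf mxE; apply: eq_bigr => i _; rewrite mul_Dg !mxE.
by rewrite expr2 mulrCA mulrA.
Qed.

Lemma ellipsoid_mx n (sigma : 'I_n -> R) (V : 'M[R]_n) (c : 'rV[R]_n) :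
  \sum_i (c 0 i * sigma i) *: row i V = c *m Dg sigma *m V.
Proof.
rewrite (mulmx_sum_row (c *m Dg sigma)); apply: eq_bigr => i _.
by rewrite mul_Dg.
Qed.

Definition ell n (M : 'M[R]_n) : set 'rV[R]_n :=
  [set y | exists c : 'rV[R]_n, nrm2 c <= 1 /\ y = c *m M]%classic.

Lemma mulfVK' (x : R) : x * x^-1 * x = x.
Proof. by case: (eqVneq x 0) => [->|h]; rewrite ?mulr0 ?mul0r // mulfV // mul1r. Qed.

Lemma row_dot n m (A : 'M[R]_(n,m)) i j : (row i A *m (row j A)^T) 0 0 = (A *m A^T) i j.
Proof. by rewrite !mxE; apply: eq_bigr => l _; rewrite !mxE. Qed.

Lemma qf_gram n (A : 'M[R]_n) c : qf (A *m A^T) c = nrm2 (c *m A).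
Proof. by rewrite /qf /nrm2 trmx_mul !mulmxA. Qed.

Lemma proj_bound n (P : 'M[R]_n) c : P^T = P -> P *m P = P -> qf P c <= nrm2 c.
Proof.
move=> Pt PP.
have h : (1%:M - P) *m (1%:M - P)^T = 1%:M - P.
  rewrite linearB /= trmx1 Pt mulmxBl mul1mx mulmxBr mulmx1 PP.
  by rewrite subrr subr0.
have := nrm2_ge0 (c *m (1%:M - P)); rewrite -qf_gram h qf_scal_sub mul1r.
by rewrite subr_ge0.
Qed.

Ltac zc x := case: (eqVneq x 0) => [->|?];
  [rewrite ?invr0 ?expr0n /= ?mulr0 ?mul0r ?mul1r ?mulr1 ?add0r ?addr0 // | by field].

Lemma svd n (B : 'M[R]_n) : exists W : 'M[R]_n, exists s : nat -> R,
  [/\ W *m W^T = 1%:M, (forall i, 0 <= s i),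
      (forall i j : nat, (i <= j)%N -> (j < n)%N -> s j <= s i),
      B^T *m B = W^T *m Dg (fun i => s i ^+ 2) *m W &
      ell B = ell (Dg (fun i => s i) *m W)].
Proof.
have sS : (B^T *m B)^T = B^T *m B by rewrite trmx_mul trmxK.
have [W [lam [WW SE srt]]] := spectral sS.
have WtW := mulmx1C WW.
have WS : W *m (B^T *m B) = Dg (fun i => lam i) *m W.
  by rewrite SE !mulmxA WW mul1mx.
have lam0 : forall i : 'I_n, 0 <= lam i.
  move=> i.
  have h : row i W *m (B^T *m B) = lam i *: row i W.
    rewrite -row_mul WS; apply/rowP => j; by rewrite [LHS]mxE Dg_mul !mxE.
  have := qf_eig h; have -> : nrm2 (row i W) = 1.
    by rewrite /nrm2 row_dot WW mxE eqxx.
  rewrite mulr1 => <-; have -> : B^T *m B = B^T *m B^T^T by rewrite trmxK.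
  rewrite qf_gram; exact: nrm2_ge0.
pose s := fun i : nat => Num.sqrt (lam i).
have s2 : forall i : 'I_n, s i ^+ 2 = lam i by move=> i; rewrite sqr_sqrtr.
exists W, s; split => //.
- by move=> i; exact: sqrtr_ge0.
- move=> i j ij jn; rewrite ler_sqrt; first exact: srt.
  exact: (lam0 (Ordinal (leq_ltn_trans ij jn))).
- by rewrite SE; congr (_ *m _ *m _); apply: Dg_ext => i; rewrite s2.
pose M := B *m W^T.
have MtM : M^T *m M = Dg (fun i => s i ^+ 2).
  rewrite /M trmx_mul trmxK mulmxA -(mulmxA W) WS -mulmxA WW mulmx1.
  by apply: Dg_ext => i; rewrite s2.
pose Ds := Dg (fun i : 'I_n => s i).
pose Dsi := Dg (fun i : 'I_n => (s i)^-1).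
pose J := Dg (fun i : 'I_n => s i * (s i)^-1).
have MJ : M *m J = M.
  apply/matrixP => r i; rewrite mul_Dg.
  case: (eqVneq (s i) 0) => [si0|sn]; last by rewrite mulfV // mulr1.
  rewrite si0 mul0r mulr0.
  have : (M^T *m M) i i = 0 by rewrite MtM /Dg !mxE eqxx mulr1n si0 expr0n.
  rewrite mxE => /eqP; rewrite psumr_eq0 => [/allP/(_ r (mem_index_enum r))|l _].
    by rewrite mxE -expr2 sqrf_eq0 => /eqP ->.
  by rewrite mxE -expr2 sqr_ge0.
pose G := M *m Dsi.
have GtG : G^T *m G = J.
  rewrite /G trmx_mul DgT -mulmxA (mulmxA M^T) MtM !DgM; apply: Dg_ext => i.
  by zc (s i).
have GDs : G *m Ds = M.
  rewrite /G -mulmxA DgM -[RHS]MJ; congr (_ *m _); apply: Dg_ext => i.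
  exact: mulrC.
have GJ : G *m J = G.
  rewrite /G -mulmxA DgM; congr (_ *m _); apply: Dg_ext => i.
  by zc (s i).
clearbody G; rewrite /ell; apply/seteqP; split => y [c [nc ->]].
- exists (c *m G); split.
    apply: (le_trans _ nc); rewrite -qf_gram; apply: proj_bound.
      by rewrite trmx_mul trmxK.
    by rewrite -mulmxA (mulmxA G^T) GtG mulmxA GJ.
  by rewrite -mulmxA (mulmxA G) GDs /M -mulmxA WtW mulmx1.
- exists (c *m (J *m G^T)); split.
    apply: (le_trans _ nc); rewrite -qf_gram trmx_mul trmxK DgT -mulmxA (mulmxA G^T).
    rewrite GtG !DgM qf_Dg nrm2E; apply: ler_sum => i _.
    rewrite -[X in _ <= X]mul1r ler_wpM2r ?sqr_ge0 //.
    case: (eqVneq (s i) 0) => [->|sn]; first by rewrite !mul0r ler01.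
    by rewrite mulfV // !mul1r.
  have -> : B = M *m W by rewrite /M -mulmxA WtW mulmx1.
  rewrite -GDs !mulmxA; congr (_ *m _); rewrite -!mulmxA; congr (_ *m _).
  rewrite (mulmxA G^T) GtG !DgM; apply: Dg_ext => i.
  by zc (s i).
Qed.

End SVD.

Section Mono.
Variable R : realType.

Lemma pid_Dg n r : (pid_mx r : 'M[R]_n) = Dg (fun i : 'I_n => ((i < r)%N)%:R).
Proof.
apply/matrixP => i j; rewrite /Dg !mxE; case: (eqVneq i j) => [->|h].
  by rewrite eqxx mulr1n.
by have h2 : (nat_of_ord i == nat_of_ord j) = false := negbTE h; rewrite mulr0n h2.
Qed.

Lemma copid_Dg n r : (copid_mx r : 'M[R]_n) = Dg (fun i : 'I_n => ((r <= i)%N)%:R).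
Proof.
apply/matrixP => i j; rewrite /copid_mx pid_Dg /Dg !mxE; case: (eqVneq i j) => [->|h].
  by rewrite !mulr1n [(r <= j)%N]leqNgt; case: (j < r)%N => /=; rewrite ?subrr ?subr0.
by have h2 : (nat_of_ord i == nat_of_ord j) = false := negbTE h; rewrite !mulr0n ?h2 /= ?subr0.
Qed.

Lemma nrm2_orth n (W : 'M[R]_n) b : W *m W^T = 1%:M -> nrm2 (b *m W) = nrm2 b.
Proof.
move=> WW; rewrite -qf_gram WW /qf mulmx1 //.
Qed.

Lemma qf_basis n (W : 'M[R]_n) f b : W *m W^T = 1%:M ->
  qf (W^T *m Dg f *m W) (b *m W) = qf (Dg f) b.
Proof.
move=> WW; rewrite /qf trmx_mul !mulmxA -(mulmxA b W) WW mulmx1.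
by rewrite -(mulmxA _ W W^T) WW mulmx1.
Qed.

Lemma sq_le (u w : R) : 0 <= u -> 0 <= w -> u ^+ 2 <= w ^+ 2 -> u <= w.
Proof. move=> hu hw h; nra. Qed.

Lemma sv_mono n (B D W W' : 'M[R]_n) (s s' : nat -> R) (kap : R) :
  D \in unitmx -> D^T = D -> 0 <= kap ->
  (forall y, nrm2 (y *m D) <= kap ^+ 2 * nrm2 y) ->
  W *m W^T = 1%:M -> W' *m W'^T = 1%:M ->
  (forall i, 0 <= s i) -> (forall i, 0 <= s' i) ->
  (forall i j : nat, (i <= j)%N -> (j < n)%N -> s j <= s i) ->
  (forall i j : nat, (i <= j)%N -> (j < n)%N -> s' j <= s' i) ->
  B^T *m B = W^T *m Dg (fun i => s i ^+ 2) *m W ->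
  (B *m D)^T *m (B *m D) = W'^T *m Dg (fun i => s' i ^+ 2) *m W' ->
  forall p, (p < n)%N -> s' p <= kap * s p.
Proof.
move=> Du Dt k0 Dn WW WW' s0 s0' srt srt' G1 G2 p pn.
pose U1 := (pid_mx p.+1 : 'M[R]_n) *m (W' *m D).
pose U2 := copid_mx p *m W.
have fW : row_free W by apply/row_freeP; exists W^T.
have fWD : row_free (W' *m D).
  apply/row_freeP; exists (invmx D *m W'^T).
  by rewrite -mulmxA (mulmxA D) mulmxV // mul1mx.
have r1 : \rank U1 = p.+1 by rewrite mxrankMfree // rank_pid_mx.
have r2 : \rank U2 = (n - p)%N by rewrite mxrankMfree // rank_copid_mx // ltnW.
have rc : (0 < \rank (U1 :&: U2))%N.
  have := mxrank_sum_cap U1 U2; rewrite r1 r2.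
  have := rank_leq_col (U1 + U2)%MS.
  move: (\rank (U1 + U2)%MS) (\rank (U1 :&: U2)%MS) => a b; lia.
have [z [zn zc]] : exists z : 'rV[R]_n, z != 0 /\ (z <= U1 :&: U2)%MS.
  have : (U1 :&: U2)%MS != 0 by apply/eqP => h; move: rc; rewrite h mxrank0.
  case/nz_row => i hi; exists (row i (U1 :&: U2)%MS); split => //; exact: row_sub.
have [a1 ea1] : exists a1, z = a1 *m U1.
  by apply/submxP; exact: submx_trans zc (capmxSl _ _).
have [a2 ea2] : exists a2, z = a2 *m U2.
  by apply/submxP; exact: submx_trans zc (capmxSr _ _).
pose b := a1 *m (pid_mx p.+1 : 'M[R]_n).
pose b2 := a2 *m (copid_mx p : 'M[R]_n).
have zy : z = b *m W' *m D by rewrite ea1 /U1 /b !mulmxA.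
have zb2 : z = b2 *m W by rewrite ea2 /U2 /b2 mulmxA.
have yn : b *m W' != 0 by apply: contraNneq zn => h; rewrite zy h mul0mx.
have low : s' p ^+ 2 * nrm2 b <= qf (Dg (fun i : 'I_n => s' i ^+ 2)) b.
  rewrite qf_Dg nrm2E mulr_sumr; apply: ler_sum => i _.
  rewrite /b pid_Dg mul_Dg; case: (ltnP i p.+1) => hi /=; last by rewrite !mulr0 expr0n /= !mulr0.
  rewrite ler_wpM2r ?sqr_ge0 // expr2 [X in _ <= X]expr2.
  have h : s' p <= s' i by apply: srt'; rewrite // -ltnS.
  by apply: ler_pM.
have upp : qf (Dg (fun i : 'I_n => s i ^+ 2)) b2 <= s p ^+ 2 * nrm2 b2.
  rewrite qf_Dg nrm2E mulr_sumr; apply: ler_sum => i _.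
  rewrite /b2 copid_Dg mul_Dg; case: (leqP p i) => hi /=; last by rewrite !mulr0 expr0n /= !mulr0.
  rewrite ler_wpM2r ?sqr_ge0 // expr2 [X in _ <= X]expr2.
  have h : s i <= s p by apply: srt.
  by apply: ler_pM.
have e1 : qf ((B *m D)^T *m (B *m D)) (b *m W') = nrm2 (z *m B^T).
  have := qf_gram ((B *m D)^T) (b *m W'); rewrite trmxK => ->.
  by rewrite zy trmx_mul Dt !mulmxA.
have e2 : qf (B^T *m B) z = nrm2 (z *m B^T).
  by have := qf_gram B^T z; rewrite trmxK.
rewrite G2 qf_basis // in e1.
rewrite zb2 G1 qf_basis // -zb2 in e2.
have hz := Dn (b *m W'); rewrite -zy in hz.
rewrite nrm2_orth // in hz.
have hb2 : nrm2 b2 = nrm2 z by rewrite zb2 (nrm2_orth _ WW).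
have bp : 0 < nrm2 b by rewrite -(nrm2_orth b WW') nrm2_gt0.
have h : s' p ^+ 2 * nrm2 b <= (kap * s p) ^+ 2 * nrm2 b.
  apply: (le_trans low); rewrite e1 -e2; apply: (le_trans upp).
  rewrite hb2 exprMn; apply: (le_trans (ler_wpM2l (sqr_ge0 (s p)) hz)).
  by rewrite mulrA (mulrC (s p ^+ 2)).
rewrite ler_pM2r // in h.
apply: sq_le h; first exact: s0'.
by rewrite mulr_ge0.
Qed.

End Mono.

Section Dil.
Variables (R : realType) (d m : nat) (P : 'I_m -> 'M[R]_d).
Hypothesis HP : hilbert_dilation_system P.

Definition Tf (f : 'I_m -> R) : 'M[R]_d := \sum_nu f nu *: P nu.

Lemma TfM f g : Tf f *m Tf g = Tf (fun nu => f nu * g nu).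
Proof.
case: HP => _ PP Porth _.
rewrite /Tf mulmx_suml; apply: eq_bigr => nu _.
rewrite mulmx_sumr (bigD1 nu) //= big1 ?addr0.
  by rewrite -scalemxAl -scalemxAr PP scalerA.
move=> mu hmu; rewrite -scalemxAl -scalemxAr Porth ?scaler0 //.
by rewrite eq_sym.
Qed.

Lemma Tf1 : Tf (fun _ => 1) = 1%:M.
Proof. by case: HP => _ _ _ <-; apply: eq_bigr => nu _; rewrite scale1r. Qed.

Lemma TfT f : (Tf f)^T = Tf f.
Proof.
case: HP => Pt _ _ _; rewrite /Tf linear_sum /=; apply: eq_bigr => nu _.
by rewrite linearZ /= Pt.
Qed.

Lemma qf_Tf f y : qf (Tf f) y = \sum_nu f nu * qf (P nu) y.
Proof.
rewrite /qf /Tf mulmx_sumr mulmx_suml summxE; apply: eq_bigr => nu _.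
by rewrite -scalemxAr -scalemxAl eZ.
Qed.

Lemma qfP_ge0 nu y : 0 <= qf (P nu) y.
Proof.
case: HP => Pt PP _ _; have -> : P nu = P nu *m (P nu)^T by rewrite Pt PP.
by rewrite qf_gram nrm2_ge0.
Qed.

Lemma Tf_bound f kap y : (forall nu, 0 <= f nu <= kap) ->
  nrm2 (y *m Tf f) <= kap ^+ 2 * nrm2 y.
Proof.
move=> hf; rewrite -qf_gram TfT TfM qf_Tf.
have -> : nrm2 y = qf (Tf (fun _ => 1)) y by rewrite Tf1 /qf /nrm2 mulmx1.
rewrite qf_Tf mulr_sumr; apply: ler_sum => nu _.
rewrite mul1r ler_wpM2r ?qfP_ge0 //.
have /andP [h0 h1] := hf nu.
by rewrite expr2; apply: ler_pM.
Qed.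

Definition T (delta : R) := Tf (fun nu => delta ^- nu.+1).

Lemma dilE delta x : dil P delta x = x *m T delta.
Proof.
rewrite /dil /T /Tf mulmx_sumr; apply: eq_bigr => nu _.
by rewrite scalemxAr.
Qed.

End Dil.

Local Open Scope classical_set_scope.

Lemma ell_of (R : realType) d (sig : 'I_d -> R) (V : 'M[R]_d) :
  ellipsoid_of sig V = ell (Dg sig *m V).
Proof.
rewrite /ellipsoid_of /ell; apply/seteqP; split => x [c [h ->]]; exists c; split.
- by rewrite nrm2E.
- by rewrite ellipsoid_mx mulmxA.
- by rewrite -nrm2E.
- by rewrite ellipsoid_mx mulmxA.
Qed.

Lemma ell_img (R : realType) d (M T : 'M[R]_d) :
  (fun x => x *m T) @` ell M = ell (M *m T).
Proof.
rewrite /ell; apply/seteqP; split.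
  by move=> _ [_ [c [h ->]] <-]; exists c; rewrite mulmxA.
by move=> y [c [h ->]]; exists (c *m M); [exists c | rewrite mulmxA].
Qed.

Lemma arith2 (R : realType) (e a b u v : R) : 0 < e -> 0 < a -> 0 < b ->
  e <= u -> u <= a / b * v -> v <= e^-1 -> b <= a / e ^+ 2.
Proof.
move=> e0 a0 b0 h1 h2 h3.
have k0 : 0 <= a / b by rewrite divr_ge0 // ltW.
have h4 : e <= a / b * e^-1 by apply: (le_trans h1 (le_trans h2 _)); rewrite ler_wpM2l.
rewrite ler_pdivlMr ?exprn_gt0 //.
have h5 : e * e <= a / b by rewrite -ler_pdivlMr // -[X in _ <= X]mulr1 -(mulfV (gt_eqF e0)) mulrA.
rewrite ler_pdivlMr // in h5.
by rewrite mulrC expr2.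
Qed.

Unset Implicit Arguments.
Theorem lemma4p9 (R : realType) (d m : nat) (P : 'I_m -> 'M[R]_d)
  (E : set 'rV[R]_d) (eps : R) :
  hilbert_dilation_system P -> is_ellipsoid E -> 0 < eps < 2^-1 ->
  exists l r : 'I_d -> R,
    (forall p, 0 < l p <= r p /\ r p / l p <= eps ^- 2) /\
    (forall delta : R, 0 < delta -> (forall p, ~ (l p <= delta <= r p)) ->
       eps_degenerate eps (dil P delta @` E)).
Proof.
move=> HP [sigma [V [[_ _ _] ->]]] /andP [e0 e1].
pose A := Dg sigma *m V.
pose B := fun delta : R => A *m T P delta.
have img : forall delta, dil P delta @` ellipsoid_of sigma V = ell (B delta).
  move=> delta; rewrite ell_of /B.
  have -> : dil P delta = (fun x => x *m T P delta) by apply: funext => x; exact: dilE.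
  by rewrite ell_img.
have svdB : forall delta : R, exists ws : 'M[R]_d * (nat -> R),
   [/\ ws.1 *m ws.1^T = 1%:M, (forall i, 0 <= ws.2 i),
      (forall i j : nat, (i <= j)%N -> (j < d)%N -> ws.2 j <= ws.2 i),
      (B delta)^T *m B delta = ws.1^T *m Dg (fun i => ws.2 i ^+ 2) *m ws.1 &
      ell (B delta) = ell (Dg (fun i => ws.2 i) *m ws.1)].
  by move=> delta; have [W [s h]] := svd (B delta); exists (W, s).
have [ws hws] := choice svdB.
pose s := fun delta => (ws delta).2.
have e2 : eps ^+ 2 <= 1.
  have h : (2 : R)^-1 < 1 by rewrite invf_lt1 // ltr1n.
  have h' : eps < 1 by apply: lt_trans h.
  by rewrite expr2; nra.
have e2p : 0 < eps ^+ 2 by rewrite exprn_gt0.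
have mono : forall delta delta' (p : nat), 0 < delta -> delta <= delta' -> (p < d)%N ->
    s delta' p <= delta / delta' * s delta p.
  move=> dl dl' p dp dd pd.
  have dp' : 0 < dl' by apply: lt_le_trans dd.
  pose D := Tf P (fun nu : 'I_m => (dl / dl') ^+ nu.+1).
  have [W1 s01 srt1 G1 _] := hws dl.
  have [W2 s02 srt2 G2 _] := hws dl'.
  have BD : B dl *m D = B dl'.
    rewrite /B -mulmxA /T (TfM HP); congr (_ *m Tf _ _); apply: funext => nu.
    rewrite expr_div_n mulrA mulVf ?mul1r // expf_neq0 // gt_eqF //.
  have Du : D \in unitmx.
    have h : D *m Tf P (fun nu : 'I_m => (dl' / dl) ^+ nu.+1) = 1%:M.
      rewrite (TfM HP) -(Tf1 HP); congr Tf; apply: funext => nu.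
      have hh : dl / dl' * (dl' / dl) = 1.
        by field; apply/andP; split; rewrite gt_eqF.
      by rewrite -exprMn hh expr1n.
    by case: (mulmx1_unit h).
  apply: (sv_mono Du (TfT HP _) _ _ W1 W2 s01 s02 srt1 srt2 G1 _ pd).
  - by rewrite divr_ge0 // ltW.
  - move=> y; apply: (Tf_bound HP) => nu.
    have r0 : 0 <= dl / dl' by rewrite divr_ge0 // ltW.
    have r1 : dl / dl' <= 1 by rewrite ler_pdivrMr // mul1r.
    rewrite exprn_ge0 //= exprS -[X in _ <= X]mulr1 ler_wpM2l //.
    exact: exprn_ile1.
  - by rewrite BD.
have intv : forall p : 'I_d, exists lr : R * R,
   [/\ 0 < lr.1 <= lr.2, lr.2 / lr.1 <= eps ^- 2 &
     forall delta, 0 < delta -> eps <= s delta p <= eps^-1 -> lr.1 <= delta <= lr.2].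
  move=> p.
  pose I := [set delta : R | 0 < delta /\ eps <= s delta p <= eps^-1].
  have pair : forall dl dl', I dl -> I dl' -> dl' <= dl / eps ^+ 2.
    move=> dl dl' [dp /andP [h1 h2]] [dp' /andP [h1' h2']].
    case: (lerP dl' dl) => hd.
      apply: (le_trans hd); rewrite ler_pdivlMr // ger_pMr //.
    have := mono dl dl' p dp (ltW hd) (ltn_ord p) => hm.
    exact: arith2 e0 dp dp' h1' hm h2.
  have ie1 : 1 <= eps ^- 2 by rewrite invf_ge1.
  case: (pselect (exists dl0, I dl0)) => [[dl0 hI0]|hne].
  - have lbI : lbound I (dl0 * eps ^+ 2).
      by move=> dl hI; rewrite -ler_pdivlMr //; exact: pair.
    have hlb : has_lbound I by exists (dl0 * eps ^+ 2).
    have ne : I !=set0 by exists dl0.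
    pose l := inf I.
    have lpos : 0 < l.
      apply: (lt_le_trans _ (lb_le_inf ne lbI)); rewrite mulr_gt0 //; by case: hI0.
    exists (l, l / eps ^+ 2) => /=; split.
    + by rewrite lpos /= ler_pdivlMr // ger_pMr.
    + by rewrite mulrAC mulfV ?gt_eqF // mul1r.
    + move=> dl dp hin; have hI : I dl by [].
      rewrite (ge_inf hlb hI) /= ler_pdivlMr //.
      apply: lb_le_inf => // dl'' hI''.
      by rewrite -ler_pdivlMr //; exact: pair.
  - exists (1, 1) => /=; split.
    + by rewrite ltr01 lexx.
    + by rewrite divr1.
    + by move=> dl dp hin; case: hne; exists dl.
have [lr hlr] := choice intv.
exists (fun p => (lr p).1), (fun p => (lr p).2); split.
  by move=> p; have [h1 h2 _] := hlr p.
move=> delta dp hout.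
have [W hs0 srt _ hell] := hws delta.
exists (fun i : 'I_d => s delta i), (ws delta).1; split.
  split; last by rewrite img hell ell_of.
  split => //; first by move=> i j ij; apply: srt.
  by move=> i; apply: hs0.
move=> i hin; apply: (hout i); have [_ _ h3] := hlr i; exact: h3 delta dp hin.
Qed.
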